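(* Let $n\ge 1$ and let $U\in\mathbb{C}^{n\times n}$ be unitary. Write $U=A+iB$ with $A,B\in\mathbb{R}^{n\times n}$, and define the real matrix \[ M=\begin{bmatrix} A & -B\\ B & A\end{bmatrix}\in\mathbb{R}^{2n\times 2n}. \] Let $M=Z\Sigma Z^{-1}$ be an eigendecomposition of $M$, where $Z\in\mathbb{C}^{2n\times 2n}$ is invertible and $\Sigma\in\mathbb{C}^{2n\times 2n}$ is diagonal. For each eigenvalue $\mu\in\sigma(M)$, let $Z_\mu\in\mathbb{C}^{2n\times m_M(\mu)}$ be the matrix formed by those columns of $Z$ whose corresponding diagonal entry of $\Sigma$ equals $\mu$. Let $L=[\,I_n\quad iI_n\,]\in\mathbb{C}^{n\times 2n}$, so that $L\begin{bmatrix}z^{(1)}\\ z^{(2)}\end{bmatrix}=z^{(1)}+iz^{(2)}$ for $z^{(1)},z^{(2)}\in\mathbb{C}^n$, and define $X_\mu:=LZ_\mu\in\mathbb{C}^{n\times m_M(\mu)}$. Then $\operatorname{rank}(X_\mu)=m_U(\mu)$, and whenever $m_U(\mu)>0$, the column space of $X_\mu$ equals the eigenspace $\ker(U-\mu I_n)$ of $U$ associated with $\mu$.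
   Context: $\sigma(\cdot)$ denotes the spectrum (set of eigenvalues) of a matrix. Since $M$ and $U$ are normal, algebraic and geometric multiplicities coincide; $m_M(\mu)$ and $m_U(\mu)$ denote the multiplicity of $\mu$ as an eigenvalue of $M$ and of $U$ respectively, with the convention $m_U(\mu)=0$ if $\mu\notin\sigma(U)$. *)

(* Defs.v *)
From HB Require Import structures.
From mathcomp Require Import all_boot all_order all_algebra.
Set Implicit Arguments. Unset Strict Implicit. Unset Printing Implicit Defensive.
Import Order.TTheory GRing.Theory Num.Theory.
Local Open Scope ring_scope.

Section Defs.
Variable C : numClosedFieldType.

Definition ctrmx m n (U : 'M[C]_(m, n)) : 'M[C]_(n, m) := (map_mx Num.conj U)^T.
Definition unitary n (U : 'M[C]_n) : Prop := U *m ctrmx U = 1%:M.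

Definition ReM n (U : 'M[C]_n) : 'M[C]_n := map_mx (fun z => 'Re z) U.
Definition ImM n (U : 'M[C]_n) : 'M[C]_n := map_mx (fun z => 'Im z) U.

Definition realify n (U : 'M[C]_n) : 'M[C]_(n + n) :=
  block_mx (ReM U) (- ImM U) (ImM U) (ReM U).

Definition Lmx n : 'M[C]_(n, n + n) := row_mx 1%:M ('i *: 1%:M).

Definition eigendecomp m (M Z : 'M[C]_m) (d : 'rV[C]_m) : Prop :=
  Z \in unitmx /\ M = Z *m diag_mx d *m invmx Z.

(* indices j with Sigma_jj = mu; its cardinality is m_M(mu) *)
Definition eig_idx m (d : 'rV[C]_m) (mu : C) : {set 'I_m} := [set j | d 0 j == mu].

Definition Zsub m (Z : 'M[C]_m) (d : 'rV[C]_m) (mu : C) : 'M[C]_(m, #|eig_idx d mu|) :=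
  colsub (@enum_val _ (mem (eig_idx d mu))) Z.

Definition in_spectrum n (U : 'M[C]_n) (mu : C) : Prop := root (char_poly U) mu.

(* m_U(mu): multiplicity of mu as eigenvalue (root of the characteristic poly);
   0 when mu is not an eigenvalue *)
Definition eig_mult n (U : 'M[C]_n) (mu : C) : nat := mup mu (char_poly U).

(* column space of X equals ker(U - mu I) (column vectors): expressed through
   row spaces of transposes *)
Definition colspace_eq_ker n k (X : 'M[C]_(n, k)) (U : 'M[C]_n) (mu : C) : bool :=
  (X^T == kermx (U - mu%:M)^T)%MS.

End Defs.

(* Main.v *)
Require Import Defs.
From HB Require Import structures.
From mathcomp Require Import all_boot all_order all_algebra.
From mathcomp Require Import ring.
Import Order.TTheory GRing.Theory Num.Theory.
Local Open Scope ring_scope.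

Lemma charpoly_conj (F : fieldType) n (P D : 'M[F]_n) : P \in unitmx ->
  char_poly (invmx P *m D *m P) = char_poly D.
Proof.
move=> Pu; rewrite /char_poly.
have -> : char_poly_mx (invmx P *m D *m P) =
   map_mx polyC (invmx P) *m char_poly_mx D *m map_mx polyC P.
  rewrite /char_poly_mx mulmxBr mulmxBl !map_mxM; congr (_ - _).
  by rewrite mul_mx_scalar -scalemxAl -map_mxM mulVmx // map_mx1 scalemx1.
rewrite !det_mulmx mulrC mulrA.
by rewrite -det_mulmx -map_mxM mulmxV // map_mx1 det1 mul1r.
Qed.

Lemma rank_diag (F : fieldType) n (c : 'rV[F]_n) :
  \rank (diag_mx c) = (\sum_(i < n) nat_of_bool (c ord0 i != 0%R))%N.
Proof.
elim: n c => [|n IH] c; first by rewrite big_ord0 flatmx0 mxrank0.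
have -> : diag_mx c = diag_mx (row_mx (@lsubmx _ 1 1 n c) (rsubmx (c : 'rV_(1 + n)))).
  by rewrite hsubmxK.
rewrite diag_mx_row.
have h := rank_diag_block_mx (diag_mx (@lsubmx F 1 1 n c)) (diag_mx (@rsubmx F 1 1 n c)).
transitivity (\rank (diag_mx (@lsubmx F 1 1 n c)) + \rank (diag_mx (@rsubmx F 1 1 n c)))%N; first exact: h.
rewrite IH big_ord_recl.
congr (_ + _)%N.
  rewrite rank_rV; congr nat_of_bool.
  congr negb; have E : @lshift 1 n (ord0 : 'I_1) = ord0 :> 'I_n.+1 by apply: val_inj.
  apply/eqP/eqP => [/matrixP/(_ ord0 ord0)|H].
    by rewrite !mxE eqxx mulr1n E.
  by apply/matrixP => i j; rewrite !ord1 !mxE eqxx mulr1n E H.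
apply: eq_bigr => i _; rewrite !mxE; congr (_ != 0); congr (c _ _).
by apply: val_inj.
Qed.

Lemma sum_count (T : Type) (r : seq T) (b : pred T) :
  (\sum_(i <- r) nat_of_bool (b i))%N = count b r.
Proof. by elim: r => [|x r IH]; rewrite ?big_nil ?big_cons ?IH. Qed.

Lemma geom_eq_alg (C : numClosedFieldType) n (U : 'M[C]_n) mu :
  U \is normalmx -> (n - \rank (U - mu%:M)%R)%N = mup mu (char_poly U).
Proof.
move/orthomx_spectralP => hU.
have Pu := spectral_unit U.
set P := spectralmx U in hU Pu; set e := spectral_diag U in hU.
have hUm : U - mu%:M = invmx P *m diag_mx (e - const_mx mu) *m P.
  rewrite hU linearB /= diag_const_mx mulmxBr mulmxBl; congr (_ - _).
  by rewrite mul_mx_scalar -scalemxAl mulVmx // scalemx1.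
rewrite hUm mxrankMfree ?row_free_unit // (eqmxMfull _ ) ?row_full_unit ?unitmx_inv //.
rewrite rank_diag hU charpoly_conj // char_poly_trig ?diag_mx_is_trig //.
rewrite -(big_map (fun i => diag_mx e i i) xpredT (fun y => 'X - y%:P)).
rewrite mu_prod_XsubC count_map.
rewrite -sum_count.
have : (\sum_(i < n) nat_of_bool (e ord0 i == mu) + \sum_(i < n) nat_of_bool ((e - const_mx mu)%R ord0 i != 0%R) = n)%N.
  rewrite -big_split /= -[RHS]card_ord -sum1_card; apply: eq_bigr => i _.
  by rewrite !mxE subr_eq0; case: (_ == _).
move=> hsum; rewrite -{1}hsum addnK; apply: eq_bigr => i _.
by rewrite /= !mxE eqxx mulr1n.
Qed.

Lemma L_realify (C : numClosedFieldType) n (U : 'M[C]_n) :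
  @Lmx C n *m realify U = U *m @Lmx C n.
Proof.
rewrite /Lmx /realify mul_row_block mul_mx_row !mul1mx -!scalemxAl !mul1mx.
rewrite -scalemxAr mulmx1; congr row_mx; apply/matrixP => i j; rewrite !mxE.
  by rewrite -Crect.
rewrite [in RHS](Crect (U i j)) mulrDr mulrA -expr2 sqrCi mulN1r addrC.
by rewrite mulrC.
Qed.

Definition Rmx (C : numClosedFieldType) n : 'M[C]_(n + n, n) :=
  col_mx (2^-1 *: 1%:M) ((- ('i * 2^-1)) *: 1%:M).

Lemma realify_R (C : numClosedFieldType) n (U : 'M[C]_n) :
  realify U *m Rmx C n = Rmx C n *m U.
Proof.
rewrite /Rmx /realify mul_block_col mul_col_mx -!scalemxAr -!scalemxAl !mulmx1 !mul1mx.
congr col_mx; apply/matrixP => i j; rewrite !mxE.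
  by rewrite [in RHS](Crect (U i j)); ring.
rewrite [in RHS](Crect (U i j)).
have -> : (- ('i * 2^-1)) * ('Re (U i j) + 'i * 'Im (U i j)) =
   - ('i * 2^-1 * 'Re (U i j)) - ('i ^+ 2) * 2^-1 * 'Im (U i j) by ring.
rewrite sqrCi; ring.
Qed.

Lemma L_R (C : numClosedFieldType) n : @Lmx C n *m Rmx C n = 1%:M.
Proof.
rewrite /Rmx /Lmx mul_row_col -!scalemxAr -!scalemxAl !mulmx1 ?mul1mx.
apply/matrixP => i j; rewrite !mxE.
have -> : 2^-1 * (i == j)%:R + - ('i / 2) * ('i * (i == j)%:R) =
   (2^-1 - 'i ^+ 2 * 2^-1) * (i == j)%:R :> C by ring.
rewrite sqrCi.
have -> : (2^-1 - (-1) * 2^-1 : C) = 2^-1 * 2 by ring.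
by rewrite mulVf ?mul1r // pnatr_eq0.
Qed.

Lemma K1 (C : numClosedFieldType) m (M Z : 'M[C]_m) d mu :
  eigendecomp M Z d -> (M - mu%:M) *m Zsub Z d mu = 0.
Proof.
move=> [Zu hM].
have MZ : M *m Z = Z *m diag_mx d by rewrite hM -!mulmxA mulVmx // mulmx1.
apply/matrixP => i j; rewrite /Zsub mulmxBl mul_scalar_mx !mxE.
have := congr1 (fun A : 'M[C]_m => A i (enum_val j)) MZ; rewrite mul_mx_diag !mxE => E.
have : enum_val j \in eig_idx d mu by apply: enum_valP.
rewrite inE => /eqP hd.
under eq_bigr do rewrite mxE.
by rewrite E hd mulrC subrr.
Qed.

Lemma K2 (C : numClosedFieldType) m (M Z : 'M[C]_m) d mu :
  eigendecomp M Z d -> forall v : 'cV_m, (M - mu%:M) *m v = 0 ->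
  exists c, v = Zsub Z d mu *m c.
Proof.
move=> [Zu hM] v hv.
set c0 := invmx Z *m v.
have vE : v = Z *m c0 by rewrite /c0 mulKVmx.
have hc0 : forall j, d 0 j != mu -> c0 j 0 = 0.
  move=> j hj.
  have : Z *m ((diag_mx d - mu%:M) *m c0) = 0.
    rewrite mulmxA mulmxBr scalar_mxC -[Z *m diag_mx d](mulmxKV Zu) -hM.
    by rewrite -mulmxBl -mulmxA -vE.
  move=> /(congr1 (mulmx (invmx Z))); rewrite mulKmx // mulmx0.
  move=> /matrixP /(_ j 0); rewrite mulmxBl mul_diag_mx mul_scalar_mx !mxE.
  by rewrite -mulrBl => /eqP; rewrite mulf_eq0 subr_eq0 (negPf hj) /= => /eqP.
exists (\col_k c0 (enum_val k) 0).
apply/matrixP => i j; rewrite vE /Zsub !mxE.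
rewrite (bigID (fun k => k \in eig_idx d mu)) /= [X in _ + X]big1 ?addr0.
  rewrite big_enum_val; apply: eq_bigr => k _; rewrite !mxE ord1 //.
move=> k; rewrite inE => hk; rewrite ord1 hc0 ?mulr0 //.
Qed.

Theorem lemma2p2 (C : numClosedFieldType) (n : nat) (hn : (0 < n)%N)
    (U : 'M[C]_n) (hU : unitary U)
    (Z : 'M[C]_(n + n)) (d : 'rV[C]_(n + n))
    (hZ : eigendecomp (realify U) Z d)
    (mu : C) (hmu : in_spectrum (realify U) mu) :
  let X := @Lmx C n *m Zsub Z d mu in
  \rank X = eig_mult U mu /\
  ((0 < eig_mult U mu)%N -> colspace_eq_ker X U mu).
Proof.
move=> X.
have hUn : U \is normalmx.
  apply/normalmxP.
  have h1 : U *m (map_mx Num.conj U)^T = 1%:M by exact: hU.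
  rewrite map_trmx in h1.
  by rewrite h1 (mulmx1C h1).
have key : (X^T == kermx (U - mu%:M)^T)%MS.
  apply/andP; split.
    rewrite sub_kermx -trmx_mul /X mulmxA mulmxBl -L_realify -scalar_mxC -mulmxBr.
    by rewrite -mulmxA (@K1 C _ _ _ _ mu hZ) mulmx0 trmx0.
  set K := kermx (U - mu%:M)^T.
  have KE : K = (K *m (Rmx C n)^T) *m (@Lmx C n)^T.
    by rewrite -mulmxA -trmx_mul L_R trmx1 mulmx1.
  rewrite KE /X trmx_mul; apply: submxMr.
  have : (K *m (Rmx C n)^T <= kermx (realify U - mu%:M)^T)%MS.
    rewrite sub_kermx -mulmxA -trmx_mul mulmxBl realify_R -scalar_mxC -mulmxBr.
    by rewrite trmx_mul mulmxA mulmx_ker mul0mx.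
  move/submx_trans; apply.
  apply/row_subP => r.
  set w := row r _.
  have hr : w *m (realify U - mu%:M)^T = 0 by rewrite /w -row_mul mulmx_ker row0.
  have hv : (realify U - mu%:M) *m w^T = 0.
    by rewrite -[realify U - mu%:M]trmxK -trmx_mul hr trmx0.
  have [c hc] := @K2 C _ _ _ _ mu hZ _ hv.
  by rewrite -[w]trmxK hc trmx_mul submxMl.
split.
  rewrite -mxrank_tr (eqmxP key) mxrank_ker mxrank_tr.
  exact: geom_eq_alg.
by move=> _; exact: key.
Qed.
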